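(* Let $n\ge 3$. The cycle $C_n$ admits an $(a,d)$-distance antimagic labeling for some integers $a$ and $d\ge 0$ if and only if either $d=0$ and $n=4$, or $d=1$ and $n$ is odd.
   Context: For a finite simple graph $G=(V,E)$ with $v=|V|$ vertices and a bijection $f:V\to\{1,\dots,v\}$, the vertex-weight of $x$ is $w(x)=\sum_{y\in N(x)} f(y)$, where $N(x)$ is the set of neighbours of $x$. For integers $a$ and $d\ge 0$, $f$ is an $(a,d)$-distance antimagic labeling if the multiset of vertex-weights equals $\{a,a+d,\dots,a+(v-1)d\}$. *)

(* Defs.v *)
From mathcomp Require Import all_boot all_order all_algebra.
Set Implicit Arguments. Unset Strict Implicit. Unset Printing Implicit Defensive.
Import GRing.Theory Num.Theory.

(* A finite simple graph is a symmetric irreflexive relation e on a finType T.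
   A labeling is f : T -> 'I_#|T|; the actual label of x is (f x).+1, so that
   labels range over {1, ..., |V|}. *)

Definition vweight (T : finType) (e : rel T) (f : T -> 'I_#|T|) (x : T) : nat :=
  \sum_(y | e x y) (f y).+1.

Definition distance_antimagic (T : finType) (e : rel T) (f : T -> 'I_#|T|)
    (a : int) (d : nat) : Prop :=
  bijective f /\
  perm_eq [seq ((vweight e f x)%:Z)%R | x <- enum T]
          [seq (a + (i * d)%:Z)%R | i <- iota 0 #|T|].

Definition cycle_rel (n : nat) : rel 'I_n :=
  fun i j => (val j == (val i).+1 %% n) || (val i == (val j).+1 %% n).

(* Main.v *)
Require Import Defs.
From mathcomp Require Import all_boot all_order all_algebra zify.
Set Implicit Arguments. Unset Strict Implicit.
Import GRing.Theory Num.Theory.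

Definition sn (N i : nat) := if i.+1 == N then 0 else i.+1.
Definition pn (N i : nat) := if i == 0 then N.-1 else i.-1.

Lemma modS_sn N i : i < N -> i.+1 %% N = sn N i.
Proof.
move=> Hi; rewrite /sn; case: eqP => [->|H]; first by rewrite modnn.
by rewrite modn_small //; lia.
Qed.

Section C.
Variable m : nat.
Hypothesis hm : 2 <= m.
Local Notation N := m.+1.

Definition so (i : 'I_N) : 'I_N := inord (sn N i).
Definition po (i : 'I_N) : 'I_N := inord (pn N i).

Lemma so_val i : (so i : nat) = sn N i.
Proof. have Hi := ltn_ord i; rewrite /so /po inordK // /sn; case: ifP => /eqP; lia. Qed.
Lemma po_val i : (po i : nat) = pn N i.
Proof. have Hi := ltn_ord i; rewrite /so /po inordK // /pn; case: ifP => /eqP; lia. Qed.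

Lemma crel (i j : 'I_N) : cycle_rel i j = (j == so i) || (j == po i).
Proof.
have Hi := ltn_ord i; have Hj := ltn_ord j.
rewrite /cycle_rel -!val_eqE /= so_val po_val !modS_sn //.
congr orb; rewrite /sn /pn; do 2 case: ifP; move=> /eqP H1 /eqP H2; apply/eqP/eqP; lia.
Qed.

Lemma so_po_ne i : so i != po i.
Proof.
have Hi := ltn_ord i.
rewrite -val_eqE /= so_val po_val /sn /pn; do 2 case: ifP; move=> /eqP H1 /eqP H2; apply/eqP; lia.
Qed.

Lemma po_so i : po (so i) = i.
Proof.
have Hi := ltn_ord i.
apply: ord_inj; rewrite po_val so_val /sn /pn; do 2 case: ifP; move=> /eqP H1 /eqP H2; lia.
Qed.

Lemma so_po i : so (po i) = i.
Proof.
have Hi := ltn_ord i.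
apply: ord_inj; rewrite so_val po_val /sn /pn; do 2 case: ifP; move=> /eqP H1 /eqP H2; lia.
Qed.

Lemma vw (f : 'I_N -> 'I_#|'I_N|) i :
  vweight (@cycle_rel N) f i = (f (so i)).+1 + (f (po i)).+1.
Proof.
rewrite /vweight (eq_bigl (fun y => (y == so i) || (y == po i))); last by move=> y; rewrite crel.
rewrite (bigD1 (so i)) /=; last by rewrite eqxx.
rewrite (bigD1 (po i)) /=; last by rewrite eqxx orbT eq_sym so_po_ne.
rewrite big1 ?addn0 // => y /andP[/andP[/orP[] -> //]].
Qed.

End C.
Lemma half_spec x : x = odd x + 2 * x./2.
Proof. by rewrite -{1}(odd_double_half x) -muln2 mulnC. Qed.

Definition alpha K x := if odd x then x./2 + K.+1 else x./2.

Ltac hs x := move: (half_spec x); case: (odd x) => /=.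

Section S.
Variable K : nat.
Hypothesis hK : 1 <= K.
Local Notation N := (2 * K).+1.

Lemma alpha_lt x : x < N -> alpha K x < N.
Proof. rewrite /alpha; hs x; lia. Qed.

Lemma alpha_inj x y : x < N -> y < N -> alpha K x = alpha K y -> x = y.
Proof. rewrite /alpha; hs x; hs y; lia. Qed.

Lemma alpha_pn k : k < N -> alpha K k + alpha K (pn N k) = k + K.
Proof.
rewrite /pn; case: (k =P 0) => [->|Hk] /=.
  rewrite /alpha /=; hs (2 * K); lia.
rewrite /alpha; hs k; hs k.-1; lia.
Qed.

Lemma alpha_pn_sn j : j < N -> alpha K (pn N j) = pn N (alpha K (sn N j)).
Proof.
move=> Hj; rewrite /sn; case: (j.+1 =P N) => [E|E].
  rewrite /pn /alpha /=; have -> : j == 0 = false by apply/eqP; lia.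
  hs j.-1; lia.
rewrite /pn /alpha; case: (j =P 0) => [->|Hj0].
  rewrite /=; hs (2 * K); lia.
case: j Hj E Hj0 => [//|i] Hj E _ /=.
rewrite negbK; hs i; lia.
Qed.
End S.

Lemma mapc (T U : Type) (c : U) (s : seq T) : map (fun _ => c) s = nseq (size s) c.
Proof. by elim: s => //= x s ->. Qed.

Lemma sum_i2 N : \sum_(0 <= i < N) i * 2 = N * N.-1.
Proof.
elim: N => [|N IH]; first by rewrite big_geq.
rewrite big_nat_recr //= IH; case: N {IH} => //= N; nia.
Qed.

Theorem theorem5 (n : nat) (d : nat) (hn : 3 <= n) :
  (exists (f : 'I_n -> 'I_#|'I_n|) (a : int), distance_antimagic (@cycle_rel n) f a d)
  <-> ((d = 0 /\ n = 4) \/ (d = 1 /\ odd n)).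
Proof.
case: n hn => [//|m] hn; have hm : 2 <= m by lia.
split.
- move=> [f [a [fbij hperm]]].
  rewrite card_ord in hperm.
  have finj : injective f := bij_inj fbij.
  have fl : forall x : 'I_m.+1, f x < m.+1.
    by move=> x; rewrite -[X in _ < X](card_ord m.+1).
  have wb : forall x, 3 <= vweight (@cycle_rel m.+1) f x <= 2 * m + 1.
    move=> x; rewrite (vw hm); have := fl (so x); have := fl (po x).
    have : (f (so x) : nat) != f (po x).
      by rewrite (inj_eq (@ord_inj _)) (inj_eq finj) (so_po_ne hm).
    move=> /eqP; lia.
  have E1 : [seq Posz (vweight (@cycle_rel m.+1) f x) | x <- enum 'I_m.+1]
      = map Posz [seq vweight (@cycle_rel m.+1) f x | x <- enum 'I_m.+1].
    by rewrite -map_comp.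
  rewrite E1 in hperm.
  have : a \in map Posz [seq vweight (@cycle_rel m.+1) f x | x <- enum 'I_m.+1].
    by rewrite (perm_mem hperm) /= mul0n addr0 mem_head.
  case/mapP => z /mapP [x0 _ ->] Ea; subst a.
  have E2 : [seq (Posz (vweight (@cycle_rel m.+1) f x0) + Posz (i * d))%R | i <- iota 0 m.+1]
     = map Posz [seq vweight (@cycle_rel m.+1) f x0 + i * d | i <- iota 0 m.+1].
    by rewrite -map_comp; apply: eq_map => i /=.
  rewrite E2 in hperm; move/perm_map_inj: hperm => hperm.
  have {}hperm := hperm (fun x y => @congr1 _ _ (fun z : int => `|z|%N) _ _).
  set A := vweight _ f x0 in hperm *.
  have hA : 3 <= A by have := wb x0; lia.
  have inR : forall i, i < m.+1 -> exists y, vweight (@cycle_rel m.+1) f y = A + i * d.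
    move=> i Hi.
    have : A + i * d \in [seq A + i * d | i <- iota 0 m.+1].
      by apply: (map_f (fun j => A + j * d)); rewrite mem_iota; lia.
    by rewrite -(perm_mem hperm) => /mapP [y _ ->]; exists y.
  have inL : forall x, exists2 i, i < m.+1 & vweight (@cycle_rel m.+1) f x = A + i * d.
    move=> x.
    have : vweight (@cycle_rel m.+1) f x \in [seq vweight (@cycle_rel m.+1) f x | x <- enum 'I_m.+1].
      by apply: map_f; rewrite mem_enum.
    rewrite (perm_mem hperm) => /mapP [i]; rewrite mem_iota => Hi ->; exists i => //; lia.
  clear E2; case: d inR inL hperm => [|[|d']] inR inL hperm.
  + left; split => //.
    have H1 : forall x, vweight (@cycle_rel m.+1) f x = A.
      by move=> x; case: (inL x) => i _ ->; rewrite muln0 addn0.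
    have := H1 (so ord0); have := H1 (po ord0).
    rewrite !(vw hm) (po_so hm) (so_po hm) => Ha Hb.
    have : f (so (so ord0)) = f (po (po ord0)) by apply: ord_inj; lia.
    move/finj/(congr1 (@nat_of_ord _)); rewrite !(so_val hm) !(po_val hm) /sn /pn /=.
    repeat case: ifP; lia.
  + right; split => //.
    have := @perm_big nat addn 0 _ _ _ xpredT id hperm; rewrite !big_map.
    rewrite (eq_bigr _ (fun j _ => vw hm f j)) big_split.
    have -> : \sum_(j : 'I_m.+1) (f (so j)).+1 = \sum_(j : 'I_m.+1) (f j).+1.
      by rewrite [RHS](reindex_inj (can_inj (po_so hm))).
    have -> : \sum_(j : 'I_m.+1) (f (po j)).+1 = \sum_(j : 'I_m.+1) (f j).+1.
      by rewrite [RHS](reindex_inj (can_inj (so_po hm))).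
    have -> : \sum_(j : 'I_m.+1) (f j).+1 = \sum_(k : 'I_#|'I_m.+1|) k.+1.
      by rewrite (reindex f) //; apply: onW_bij.
    rewrite card_ord -(big_mkord xpredT (fun i => i.+1)).
    change (iota 0 m.+1) with (index_iota 0 m.+1).
    rewrite (eq_bigr (fun i => i + 1)); last by move=> i _; rewrite addn1.
    rewrite !big_split !sum_nat_const_nat subn0.
    rewrite (eq_bigr _ (fun i _ => muln1 i)).
    have := sum_i2 m.+1; rewrite -big_distrl => HS HE.
    set S := \sum_(0 <= i < m.+1) i in HS HE.
    have HE2 : S + m.+1 * 1 + (S + m.+1 * 1) = m.+1 * A + S := HE.
    have H3 : S + 2 * m.+1 = m.+1 * A by lia.
    have HS2 : S * 2 = m.+1 * m := HS.
    have : m.+1 * (m + 4) = m.+1 * (2 * A) by clear HS HE; lia.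
    move/eqP; rewrite eqn_pmul2l // => /eqP H.
    have -> : m = (A - 2).*2 by lia.
    by rewrite /= odd_double.
  + exfalso; have [y Hy] := inR m (ltnSn m).
    have := wb y; rewrite Hy.
    have : m * d'.+2 >= 2 * m by rewrite mulnC; apply: leq_mul.
    lia.
- case => [[-> E]|[-> Ho]].
  + case: E => Em; subst m.
    pose f : 'I_4 -> 'I_#|'I_4| :=
      fun x => cast_ord (esym (card_ord 4)) (inord (nth 0 [:: 0; 1; 3; 2] x)).
    have hb : forall z : 'I_4, nth 0 [:: 0; 1; 3; 2] z < 4.
      by case=> [[|[|[|[|z]]]] Hz].
    have fv : forall z, (f z : nat) = nth 0 [:: 0; 1; 3; 2] z.
      by move=> z; rewrite /f /= inordK.
    have w5 : forall x, (f (so x)).+1 + (f (po x)).+1 = 5.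
      move=> x; rewrite !fv (so_val hm) (po_val hm).
      by case: x => [[|[|[|[|x]]]] Hx].
    exists f, (Posz 5); split.
      apply: inj_card_bij; last by rewrite !card_ord.
      move=> x y /(congr1 (@nat_of_ord _)); rewrite !fv => H; apply: ord_inj; move: H.
      by case: x => [[|[|[|[|x]]]] Hx] //; case: y => [[|[|[|[|y]]]] Hy].
    rewrite (eq_map (fun x => congr1 Posz (vw hm f x))).
    rewrite (eq_map (fun x => congr1 Posz (w5 x))).
    rewrite (eq_map (g := fun _ => Posz 5)); last by move=> i; rewrite muln0 addr0.
    by rewrite !mapc size_enum_ord size_iota card_ord.
  + have [K EK] : exists K, m = 2 * K.
      exists m./2; move: Ho; rewrite /=; have := half_spec m; case: (odd m) => //=; lia.
    subst m; have hK : 1 <= K by lia.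
    have hs : forall x, x < (2 * K).+1 -> sn (2 * K).+1 x < (2 * K).+1.
      by move=> x Hx; rewrite /sn; case: ifP => /eqP; lia.
    have al : forall x : 'I_(2 * K).+1, alpha K (alpha K x) < #|'I_(2 * K).+1|.
      by move=> x; rewrite card_ord; apply: (alpha_lt hK); apply: (alpha_lt hK).
    pose f := fun x => Ordinal (al x).
    have wv : forall x, vweight (@cycle_rel (2 * K).+1) f x
                        = K + 2 + alpha K (sn (2 * K).+1 x).
      move=> x; rewrite (vw hm) /= (so_val hm) (po_val hm).
      have Hx := ltn_ord x.
      rewrite (alpha_pn_sn hK Hx).
      have := alpha_pn hK (alpha_lt hK (hs _ Hx)); lia.
    exists f, (Posz (K + 2)); split.
      apply: inj_card_bij; last by rewrite !card_ord.
      move=> x y /(congr1 (@nat_of_ord _)) /= H; apply: ord_inj.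
      apply: (alpha_inj hK (ltn_ord x) (ltn_ord y)).
      exact: (alpha_inj hK (alpha_lt hK (ltn_ord x)) (alpha_lt hK (ltn_ord y)) H).
    rewrite card_ord (eq_map (fun x => congr1 Posz (wv x))).
    have -> : [seq (Posz (K + 2) + Posz (i * 1))%R | i <- iota 0 (2 * K).+1]
        = map (fun i => Posz (K + 2 + i)) (iota 0 (2 * K).+1).
      by apply: eq_map => i /=; rewrite muln1 PoszD.
    have -> : [seq Posz (K + 2 + alpha K (sn (2 * K).+1 (nat_of_ord x))) | x : 'I_(2 * K).+1 <- enum 'I_(2 * K).+1]
        = map (fun i => Posz (K + 2 + i))
            (map (fun x => alpha K (sn (2 * K).+1 x)) (iota 0 (2 * K).+1)).
      by rewrite -val_enum_ord -!map_comp.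
    apply: perm_map.
    have hu : uniq (map (fun x => alpha K (sn (2 * K).+1 x)) (iota 0 (2 * K).+1)).
      rewrite map_inj_in_uniq ?iota_uniq // => x y; rewrite !mem_iota.
      move=> /andP[_ Hx] /andP[_ Hy] /(alpha_inj hK (hs _ Hx) (hs _ Hy)).
      by rewrite /sn; do 2 case: ifP; move=> /eqP H1 /eqP H2; lia.
    apply: (uniq_perm hu (iota_uniq _ _)).
    apply: (uniq_min_size hu _ _).2; last by rewrite size_map.
    move=> z /mapP [x]; rewrite !mem_iota => /andP [_ Hx] ->.
    by apply/andP; split => //; exact: (alpha_lt hK (hs _ Hx)).
Qed.
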